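(* Let $T(n)=(3n+1)/2^{v_2(3n+1)}$ be the Syracuse map. For an odd positive integer $n$, let $L=v_2(n+1)-1$, let $r=v_2(3T^L(n)+1)$, and let $n'=T^{L+1}(n)$. Then $$\log_2\frac{n'}{n}=X(n)+C(n),\qquad X(n)=(L+1)\log_2 3-(L+r),\qquad C(n)=\log_2\!\Bigl(1+\frac{1-(2/3)^{L+1}}{n}\Bigr).$$ The correction satisfies $0<C(n)<\log_2(1+1/n)$, and (for fixed $L$) $C(n)$ is monotonically decreasing in $n$.
   Context: $v_2$ is the $2$-adic valuation, $T^j$ the $j$-th iterate of $T$. *)

(* Defs.v *)
From mathcomp Require Import ssreflect ssrfun ssrbool eqtype ssrnat div prime.
From Stdlib Require Import Reals.

(* 2-adic valuation of a natural number (v2 0 = 0, irrelevant here). *)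
Definition v2 (m : nat) : nat := logn 2 m.

Definition syr (n : nat) : nat := (3 * n + 1) %/ 2 ^ v2 (3 * n + 1).

Definition Lof (n : nat) : nat := v2 (n + 1) - 1.
Definition rof (n : nat) : nat := v2 (3 * iter (Lof n) syr n + 1).
Definition nprime (n : nat) : nat := iter (Lof n).+1 syr n.

Definition log2 (x : R) : R := (ln x / ln 2)%R.

Definition Xof (n : nat) : R :=
  (INR (Lof n + 1) * log2 3 - INR (Lof n + rof n))%R.

Definition CL (L n : nat) : R :=
  log2 (1 + (1 - (2/3) ^ (L + 1)) / INR n)%R.

Definition Cof (n : nat) : R := CL (Lof n) n.

(* Main.v *)
Require Import Defs.
From mathcomp Require Import ssreflect ssrfun ssrbool eqtype ssrnat div prime.
From Stdlib Require Import Reals.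
From Stdlib Require Import Lra.
From mathcomp Require Import zify.
Import ssrnat.

Section RealPart.
Local Open Scope R_scope.
Lemma p23 k : (2/3)^k * 3^k = 2^k.
Proof. induction k; simpl; [lra|]. rewrite <- IHk; field. Qed.

Lemma ln2_pos : 0 < ln 2.
Proof. have := ln_lt_2; lra. Qed.

Lemma c_bounds k : 0 < (2/3)^(S k) < 1.
Proof.
split; [apply pow_lt; lra|].
have := pow_lt_1_compat (2/3) (S k) ltac:(lra) (Nat.lt_0_succ k); lra.
Qed.

Lemma real_part (a N : R) (L r : nat) : 0 < a ->
  N * 2 ^ (L + r) + 2 ^ (S L) = 3 ^ (S L) * (a + 1) ->
  ln (N / a) / ln 2 =
  INR (S L) * (ln 3 / ln 2) - INR (L + r) + ln (1 + (1 - (2/3)^(S L)) / a) / ln 2.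
Proof.
move=> Ha E.
have [c0 c1] := c_bounds L.
have Hy : 0 < 1 + (1 - (2/3)^(S L)) / a.
  have : 0 < (1 - (2/3)^(S L)) / a by apply Rdiv_lt_0_compat; lra.
  lra.
have P3 : 0 < 3 ^ S L by apply pow_lt; lra.
have P2 : 0 < 2 ^ (L + r) by apply pow_lt; lra.
have EN : N / a = 3 ^ S L * / 2 ^ (L + r) * (1 + (1 - (2/3)^(S L)) / a).
  have EN' : N = (3 ^ S L * (a + 1) - 2 ^ S L) / 2 ^ (L + r).
    apply (Rmult_eq_reg_r (2^(L+r))); last lra.
    rewrite /Rdiv Rmult_assoc Rinv_l; lra.
  rewrite EN' -(p23 (S L)). move: P3 P2 Ha. generalize (3 ^ S L) (2 ^ (L + r)) ((2/3) ^ S L) => X Y c ? ? ?. field. lra.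
rewrite EN ln_mult // ?ln_mult //; try (apply Rinv_0_lt_compat; lra);
  try (apply Rmult_lt_0_compat; try apply Rinv_0_lt_compat; lra).
rewrite ln_Rinv //.
rewrite (ln_pow 3) ?(ln_pow 2); try lra.
rewrite S_INR.
have := ln2_pos.
generalize (ln 2) (ln 3) (ln (1 + (1 - (2 / 3) ^ S L) / a)) (INR L) (INR (L + r)).
move=> l2 l3 ly iL iLr H2. field. lra. all: try lra. apply pow_lt; lra.
Qed.
End RealPart.
Lemma powE m n : Nat.pow m n = expn m n.
Proof. elim: n => [|n IH] //=; by rewrite expnS IH. Qed.

Lemma v2_2odd o : odd o -> v2 (2 * o) = 1.
Proof.
move=> Ho; rewrite /v2 mulnC logn_Gauss ?coprime2n //.
Qed.

Lemma syr_2odd x o : odd o -> 3 * x + 1 = 2 * o -> syr x = o.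
Proof.
move=> Ho E; rewrite /syr E v2_2odd // powE expn1 mulKn //.
Qed.

Lemma iter_syr n L m k : n + 1 = 2 ^ L.+1 * m -> k <= L ->
  iter k syr n + 1 = 3 ^ k * 2 ^ (L.+1 - k) * m.
Proof.
move=> Hn; elim: k => [|k IH] Hk; first by rewrite expn0 mul1n subn0.
have Hk' : k <= L by apply: ltnW.
have {}IH := IH Hk'.
rewrite iterS.
have Hm : 0 < m by case: (posnP m) Hn => [->|]; rewrite ?muln0 ?addn1.
set z := 3 ^ k * 2 ^ (L - k.+1) * m.
have Hz : 0 < z by rewrite /z !muln_gt0 !expn_gt0 Hm.
have Ex : iter k syr n + 1 = 4 * z.
  rewrite IH /z -!mulnA. have E2 : 2 ^ (L.+1 - k) = 4 * 2 ^ (L - k.+1).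
  { have -> : L.+1 - k = (L - k.+1).+2 by lia. by rewrite !expnS mulnA. }
  rewrite E2; lia.
rewrite (@syr_2odd _ (6 * z - 1)).
- rewrite /z subSS; have -> : L - k = (L - k.+1).+1 by lia.
  rewrite !expnS; lia.
- have -> : 6 * z - 1 = (6 * z - 2).+1 by lia.
  rewrite /= ; have -> : 6 * z - 2 = 2 * (3 * z - 1) by lia.
  by rewrite oddM.  
- lia.
Qed.

Lemma key_nat n : odd n ->
  nprime n * 2 ^ (rof n + Lof n) + 2 ^ (Lof n).+1 = 3 ^ (Lof n).+1 * (n + 1).
Proof.
move=> Hodd.
have H2 : 2 %| n + 1 by rewrite addn1 dvdn2 /= Hodd.
have Hl : 0 < logn 2 (n + 1) by rewrite logn_gt0 mem_primes /= H2 addn1.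
have HL : (Lof n).+1 = logn 2 (n + 1) by rewrite /Lof /v2; lia.
set L := Lof n.
set m := (n + 1) %/ 2 ^ L.+1.
have Hn : n + 1 = 2 ^ L.+1 * m by rewrite /m mulnC divnK // HL pfactor_dvdnn.
have Hx := @iter_syr n L m L Hn (leqnn L).
rewrite (_ : L.+1 - L = 1) in Hx; last by lia.
rewrite /nprime iterS -/L.
set x := iter L syr n.
rewrite -/x in Hx.
have -> : rof n = v2 (3 * x + 1) by [].
have Hd : syr x * 2 ^ v2 (3 * x + 1) = 3 * x + 1.
  by rewrite /syr powE divnK // pfactor_dvdnn.
rewrite expnD mulnA Hd Hn.
have Hm : 0 < m by case: (posnP m) Hn => [->|]; rewrite ?muln0 ?addn1.
have HQ : 0 < 3 ^ L by rewrite expn_gt0.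
rewrite !expnS expn0 in Hx *.
set P := 2 ^ L. set Q := 3 ^ L. rewrite -/Q in Hx HQ.
nia.
Qed.

Lemma INR2 : INR 2 = 2%R.
Proof. simpl; lra. Qed.

Lemma INR_expn m k : INR (expn m k) = (INR m ^ k)%R.
Proof. by rewrite -powE pow_INR. Qed.

Lemma log2_lt x y : (0 < x)%R -> (x < y)%R -> (log2 x < log2 y)%R.
Proof.
move=> Hx Hxy; rewrite /log2 /Rdiv; apply Rmult_lt_compat_r.
- apply Rinv_0_lt_compat, ln2_pos.
- by apply ln_increasing.
Qed.

Theorem mainTheorem4 :
  (forall n : nat, odd n -> 0 < n ->
     log2 (INR (nprime n) / INR n) = (Xof n + Cof n)%R
     /\ (0 < Cof n)%R
     /\ (Cof n < log2 (1 + 1 / INR n))%R)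
  /\
  (forall n1 n2 : nat, odd n1 -> odd n2 -> 0 < n1 -> n1 < n2 ->
     Lof n1 = Lof n2 -> (Cof n2 < Cof n1)%R).
Proof.
split.
- move=> n Hodd Hpos.
  have Ha : (0 < INR n)%R by apply lt_0_INR; apply/ltP.
  have E := key_nat n Hodd.
  apply (f_equal INR) in E.
  rewrite -!multE -!plusE !plus_INR !mult_INR !INR_expn INR2 in E.
  have [c0 c1] := c_bounds (Lof n).
  have Hb : (0 < (1 - (2/3)^(Lof n).+1) / INR n)%R.
    apply Rdiv_lt_0_compat; lra.
  rewrite /Xof /Cof /CL !addn1.
  split; last split.
  + rewrite /log2 (@real_part _ _ (Lof n) (rof n)) //.
    rewrite plus_INR (Nat.add_comm (rof n)) in E.
    change (Lof n + rof n)%coq_nat with (Lof n + rof n) in E.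
    rewrite (_ : INR 3 = 3%R) in E; last by simpl; lra.
    simpl INR in E. lra.
  + have -> : 0%R = log2 1 by rewrite /log2 ln_1 /Rdiv Rmult_0_l.
    apply log2_lt; lra.
  + apply log2_lt; first lra.
    apply Rplus_lt_compat_l; rewrite /Rdiv; apply Rmult_lt_compat_r;
      [apply Rinv_0_lt_compat|]; lra.
- move=> n1 n2 _ _ H1 H12 EL.
  rewrite /Cof /CL EL addn1.
  have [c0 c1] := c_bounds (Lof n2).
  have Ha1 : (0 < INR n1)%R by apply lt_0_INR; apply/ltP.
  have Ha12 : (INR n1 < INR n2)%R by apply lt_INR; apply/ltP.
  apply log2_lt.
  + have : (0 < (1 - (2/3)^(Lof n2).+1) / INR n2)%R.
      apply Rdiv_lt_0_compat; lra.
    lra.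
  + apply Rplus_lt_compat_l; rewrite /Rdiv; apply Rmult_lt_compat_l; first lra.
    apply Rinv_lt_contravar; nra.
Qed.
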